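(* Let $\lambda$ be a partition of $n$ with $s>t\ge1$, where $t=\lambda_2-1$ and $s=\lambda_1-1$. Let $\mathcal{G}$ be the generating set of $\mathcal{I}_\lambda$ consisting of: $e_1(n),\dots,e_{\ell(\lambda)-1}(n)$; the sets $e_{b_k}(n-k)$ for $1\le k\le t$, where $b_k=\lambda'_1+\cdots+\lambda'_k-k+1$; and all square-free monomials of degree $n-s$. Writing $S=\{x_1,\dots,x_n\}$, the set obtained from $\mathcal{G}$ by removing the $\binom{n-s+t}{t}$ square-free monomials $$e_{n-s}\big(S\setminus\{x_1,x_2,\dots,x_{s-t},x_{i_1},\dots,x_{i_t}\}\big),\qquad s-t<i_1<i_2<\cdots<i_t\le n,$$ still generates $\mathcal{I}_\lambda$.
   Context: $k$ is a field of characteristic $0$ and $R=k[x_1,\dots,x_n]$. For a set $S$ of variables, $e_r(S)$ is the $r$-th elementary symmetric polynomial in the variables of $S$ ($e_0=1$, $e_r(S)=0$ if $r>|S|$); note $e_r(S)$ with $|S|=r$ is the square-free monomial $\prod_{x\in S}x$. For $1\le m\le n$, $e_r(m)=\{e_r(S): S\subseteq\{x_1,\dots,x_n\},\ |S|=m\}$. A partition $\lambda$ of $n$ has parts $\lambda_1\ge\lambda_2\ge\cdots$ (zero beyond its length $\ell(\lambda)$) and conjugate $\lambda'_i=\#\{j:\lambda_j\ge i\}$. For $1\le m\le n$ let $\delta_m(\lambda)=\lambda'_n+\cdots+\lambda'_{n-m+1}$ ($\lambda'_i=0$ for $i>\lambda_1$). The De Concini–Procesi ideal $\mathcal{I}_\lambda\subseteq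 R$ is the ideal generated by all elements of the sets $e_r(m)$ with $1\le m\le n$ and $m\ge r>m-\delta_m(\lambda)$. *)

(* Defs.v *)
From HB Require Import structures.
From mathcomp Require Import all_boot all_order all_algebra.
From mathcomp Require Import mpoly.
Set Implicit Arguments. Unset Strict Implicit. Unset Printing Implicit Defensive.
Import GRing.Theory.
Local Open Scope ring_scope.

(* Variables x_1..x_n are 'X_i for i : 'I_n (0-based: x_{j} = 'X_(j-1)). *)

Definition esym (k : fieldType) (n : nat) (r : nat) (S : {set 'I_n}) : {mpoly k[n]} :=
  \sum_(T : {set 'I_n} | (T \subset S) && (#|T| == r)) \prod_(i in T) 'X_i.

Definition is_partition (lam : seq nat) (n : nat) : bool :=
  [&& sorted geq lam, all (fun x => 0 < x)%N lam & sumn lam == n].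

(* lambda_i, 1-indexed, zero beyond the length *)
Definition part (lam : seq nat) (i : nat) : nat := nth 0%N lam i.-1.

Definition conj_part (lam : seq nat) (i : nat) : nat := count (fun x => i <= x)%N lam.

Definition delta (lam : seq nat) (n m : nat) : nat :=
  (\sum_(n - m + 1 <= i < n + 1) conj_part lam i)%N.

(* Generators of the De Concini--Procesi ideal: e_r(S), |S| = m, 1 <= m <= n,
   m >= r > m - delta_m(lambda)  (written r + delta_m > m to avoid truncation). *)
Definition DP_gen (k : fieldType) (n : nat) (lam : seq nat) (p : {mpoly k[n]}) : Prop :=
  exists (m r : nat) (S : {set 'I_n}),
    [/\ (1 <= m <= n)%N, (r <= m)%N, (m < r + delta lam n m)%N, #|S| = m
      & p = esym k r S].

Definition ideal_gen (k : fieldType) (n : nat) (G : {mpoly k[n]} -> Prop)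
  (p : {mpoly k[n]}) : Prop :=
  exists s : seq ({mpoly k[n]} * {mpoly k[n]}),
    (forall q, q \in s -> G q.2) /\ p = \sum_(q <- s) q.1 * q.2.

Definition DP_ideal (k : fieldType) (n : nat) (lam : seq nat) : {mpoly k[n]} -> Prop :=
  ideal_gen (DP_gen (k := k) (n := n) lam).

Definition bk (lam : seq nat) (j : nat) : nat :=
  ((\sum_(1 <= i < j.+1) conj_part lam i) + 1 - j)%N.

Definition Gset (k : fieldType) (n : nat) (lam : seq nat) (p : {mpoly k[n]}) : Prop :=
  let t := (part lam 2).-1 in
  let s := (part lam 1).-1 in
  (exists j, (1 <= j <= (size lam).-1)%N /\ p = esym k j [set: 'I_n])
  \/ (exists j (S : {set 'I_n}), [/\ (1 <= j <= t)%N, #|S| = (n - j)%N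
                                    & p = esym k (bk lam j) S])
  \/ (exists S : {set 'I_n}, #|S| = (n - s)%N /\ p = esym k (n - s) S).

(* The removed monomials e_{n-s}(S \ {x_1..x_{s-t}, x_{i_1},..,x_{i_t}}),
   s-t < i_1 < ... < i_t <= n  (0-based: U is a t-subset of {i | s-t <= i}). *)
Definition removed (k : fieldType) (n : nat) (lam : seq nat) (p : {mpoly k[n]}) : Prop :=
  let t := (part lam 2).-1 in
  let s := (part lam 1).-1 in
  exists U : {set 'I_n},
    [/\ #|U| = t, (forall i, i \in U -> (s - t <= i)%N)
      & p = esym k (n - s) (~: ([set i : 'I_n | (i < s - t)%N] :|: U))].
Arguments esym : clear implicits.
Arguments DP_gen : clear implicits.
Arguments ideal_gen : clear implicits.
Arguments DP_ideal : clear implicits.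
Arguments Gset : clear implicits.
Arguments removed : clear implicits.

(* Main.v *)
Require Import Defs.
From HB Require Import structures.
From mathcomp Require Import all_boot all_order all_algebra.
From mathcomp Require Import mpoly zify.
Set Implicit Arguments. Unset Strict Implicit. Unset Printing Implicit Defensive.
Definition LL (lam : seq nat) (j : nat) : nat := \sum_(1 <= i < j.+1) conj_part lam i.

Lemma sum_le_min x j : \sum_(1 <= i < j.+1) (i <= x) = minn x j.
Proof.
elim: j => [|j IH]; first by rewrite big_geq // minn0.
rewrite big_nat_recr //= IH; case: (leqP j.+1 x) => h /=; lia.
Qed.

Lemma LL_map lam j : LL lam j = sumn [seq minn x j | x <- lam].
Proof.
rewrite /LL /conj_part; elim: lam => [|x lam IH] /=.
  by rewrite big1.
by rewrite -IH -sum_le_min -big_split.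
Qed.

Lemma sumn_min_le s j : (sumn [seq minn x j | x <- s] <= sumn s)%N.
Proof. by elim: s => //= x s IH; apply: leq_add => //; apply: geq_minl. Qed.

Lemma sumn_min_eq s j : all (fun x => x <= j)%N s -> sumn [seq minn x j | x <- s] = sumn s.
Proof. by elim: s => //= x s IH /andP [xj /IH ->]; rewrite (minn_idPl xj). Qed.

Lemma sumn_min_size s : all (fun x => 0 < x)%N s -> sumn [seq minn x 1 | x <- s] = size s.
Proof. by elim: s => //= x s IH /andP [x0 /IH ->]; case: x x0. Qed.

Lemma le_sumn s x : x \in s -> (x <= sumn s)%N.
Proof.
elim: s => //= y s IH; rewrite inE => /orP [/eqP ->|/IH]; first exact: leq_addr.
by move=> h; apply: leq_trans h (leq_addl _ _).
Qed.

Section Part.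
Variables (lam : seq nat) (n : nat).
Hypothesis hp : is_partition lam n.

Lemma part_le x : x \in lam -> (x <= n)%N.
Proof. by case/and3P: hp => _ _ /eqP <-; apply: le_sumn. Qed.

Lemma LL_n : LL lam n = n.
Proof.
rewrite LL_map sumn_min_eq; first by case/and3P: hp => _ _ /eqP.
by apply/allP => x; apply: part_le.
Qed.

Lemma LL_delta j : (j <= n)%N -> (LL lam j + delta lam n (n - j) = n)%N.
Proof.
move=> jn; rewrite /delta /LL subKn // !addn1 -big_cat_nat //.
exact: LL_n.
Qed.

Lemma LL_size : LL lam 1 = size lam.
Proof. by rewrite LL_map sumn_min_size //; case/and3P: hp. Qed.

Lemma DP_cond j r : (j <= n)%N ->
  (n - j < r + delta lam n (n - j))%N = (LL lam j < r + j)%N.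
Proof. move=> jn; have := LL_delta jn; lia. Qed.

End Part.

Section Part2.
Variables (lam : seq nat) (n : nat).
Hypothesis hp : is_partition lam n.
Hypothesis h1 : (1 <= (part lam 2).-1)%N.

Lemma lam_shape : exists a b rest, lam = a :: b :: rest /\
  all (fun x => x <= b)%N rest /\ (b <= a)%N /\ (a + b + sumn rest = n)%N.
Proof.
case/and3P: hp; case: lam h1 => [|a [|b rest]] //= _ srt _ /eqP sn.
exists a, b, rest; split => //; split; last first.
  by split; [case/andP: srt | lia].
have /andP [_ srt2] := srt.
have := order_path_min (leT := geq) _ srt2; apply.
by move=> x y z /= h h'; apply: leq_trans h' h.
Qed.

Lemma LL_le j : (LL lam j <= minn (part lam 1) j + (n - part lam 1))%N.
Proof.
have [a [b [rest [-> [_ [_ sn]]]]]] := lam_shape.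
rewrite LL_map /=; have := sumn_min_le (b :: rest) j; rewrite /=; rewrite /part /=; lia.
Qed.

Lemma LL_eq j : (part lam 2 <= j)%N -> LL lam j = minn (part lam 1) j + (n - part lam 1).
Proof.
have [a [b [rest [-> [al [_ sn]]]]]] := lam_shape; rewrite /part /= => bj.
rewrite LL_map /= sumn_min_eq; first lia.
by apply/allP => x xr; apply: leq_trans bj; apply: (allP al).
Qed.

Lemma LL_ge j : (j <= part lam 1)%N -> (j <= LL lam j)%N.
Proof.
have [a [b [rest [-> [_ [_ sn]]]]]] := lam_shape; rewrite /part /= => ja.
rewrite LL_map /=; lia.
Qed.

Lemma a_le_n : (part lam 1 <= n)%N.
Proof. have [a [b [rest [-> [_ [_ sn]]]]]] := lam_shape; rewrite /part /=; lia. Qed.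

End Part2.

Import GRing.Theory.
Local Open Scope ring_scope.

Section Ideal.
Variables (k : fieldType) (n : nat) (G : {mpoly k[n]} -> Prop).
Local Notation J := (ideal_gen k n G).

Lemma J0 : J 0.
Proof. by exists [::]; split => //; rewrite big_nil. Qed.

Lemma Jg q : G q -> J q.
Proof.
move=> Gq; exists [:: (1, q)]; split; first by move=> r; rewrite inE => /eqP ->.
by rewrite big_seq1 mul1r.
Qed.

Lemma JD p q : J p -> J q -> J (p + q).
Proof.
move=> [s1 [H1 ->]] [s2 [H2 ->]]; exists (s1 ++ s2); split; last by rewrite big_cat.
by move=> r; rewrite mem_cat => /orP [/H1|/H2].
Qed.

Lemma JM a p : J p -> J (a * p).
Proof.
move=> [s [H ->]]; exists [seq (a * x.1, x.2) | x <- s]; split.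
  by move=> r /mapP [x xs ->] /=; apply: H.
by rewrite big_map mulr_sumr; apply: eq_bigr => x _; rewrite mulrA.
Qed.

Lemma JN p : J p -> J (- p).
Proof. by move=> Hp; rewrite -mulN1r; apply: JM. Qed.

Lemma JB p q : J p -> J q -> J (p - q).
Proof. by move=> Hp Hq; apply: JD => //; apply: JN. Qed.

Lemma Jsum (I : Type) (r : seq I) (P : pred I) (F : I -> {mpoly k[n]}) :
  (forall i, P i -> J (F i)) -> J (\sum_(i <- r | P i) F i).
Proof.
move=> H; elim: r => [|i r IH]; first by rewrite big_nil; apply: J0.
by rewrite big_cons; case: ifP => // Pi; apply: JD => //; apply: H.
Qed.

Lemma Jdiv (c : nat) p : [pchar k] =i pred0 -> (0 < c)%N ->
  J (c%:R * p) -> J p.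
Proof.
move=> ch c0 Hp.
have cn0 : (c%:R : k) != 0 by move/pcharf0P: ch => ->; rewrite -lt0n.
have -> : p = ((c%:R : k)^-1)%:MP * (c%:R * p).
  by rewrite mulrA -mpolyC_nat -mpolyCM mulVf // mul1r.
exact: JM.
Qed.

End Ideal.
Section Esym.
Variables (k : fieldType) (n : nat).
Local Notation ES := (Defs.esym k n).
Definition mono (T : {set 'I_n}) : {mpoly k[n]} := \prod_(i in T) 'X_i.

Lemma esym_T1 r (S : {set 'I_n}) x : x \notin S ->
  ES r.+1 (x |: S) = ES r.+1 S + 'X_x * ES r S.
Proof.
move=> xS; rewrite /Defs.esym. rewrite (bigID (fun T : {set 'I_n} => x \in T)) /= addrC; congr (_ + _).
  apply: eq_bigl => T; apply/idP/idP.
    case/andP => /andP [sT cT] xT; rewrite cT andbT.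
    apply/subsetP => y yT; have := subsetP sT y yT; rewrite in_setU1.
    by case/orP => // /eqP yx; move: xT; rewrite -yx yT.
  case/andP => sT cT; rewrite cT andbT; apply/andP; split.
    by apply: subset_trans sT (subsetUr _ _).
  by apply/negP => xT; move: xS; rewrite (subsetP sT x xT).
rewrite mulr_sumr (reindex_onto (fun T' => x |: T') (fun T => T :\ x)) /=; last first.
  by move=> T /andP [_ xT]; rewrite setD1K.
apply: eq_big => T.
  apply/idP/idP.
    case/andP => /andP [/andP [sT cT] _] /eqP eT.
    have xT : x \notin T by rewrite -eT setD11.
    move: cT; rewrite cardsU1 xT add1n eqSS => -> ; rewrite andbT.
    apply/subsetP => y yT; have := subsetP sT y (setU1r x yT); rewrite in_setU1.
    by case/orP => // /eqP yx; move: xT; rewrite -yx yT.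
  case/andP => sT cT.
  have xT : x \notin T by apply/negP => xT; move: xS; rewrite (subsetP sT x xT).
  rewrite setU11 andbT setU1K // eqxx andbT cardsU1 xT (eqP cT) eqxx andbT.
  exact: setUS.
case/andP => /andP [_ _] /eqP eT.
have xT : x \notin T by rewrite -eT setD11.
by rewrite big_setU1.
Qed.


Lemma esym_aux r (S : {set 'I_n}) x : x \in S ->
  'X_x * Defs.esym k n r (S :\ x) =
  \sum_(T : {set 'I_n} | (T \subset S) && (#|T| == r.+1) && (x \in T)) \prod_(i in T) 'X_i.
Proof.
move=> xS; rewrite /Defs.esym mulr_sumr; symmetry.
rewrite (reindex_onto (fun T' => x |: T') (fun T => T :\ x)) /=; last first.
  by move=> T /andP [_ xT]; rewrite setD1K.
apply: eq_big => T.
  apply/idP/idP.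
    case/andP => /andP [/andP [sT cT] _] /eqP eT.
    have xT : x \notin T by rewrite -eT setD11.
    move: cT; rewrite cardsU1 xT add1n eqSS => -> ; rewrite andbT.
    apply/subsetP => y yT; rewrite in_setD1 (subsetP sT y (setU1r x yT)) andbT.
    by apply/negP => /eqP yx; move: xT; rewrite -yx yT.
  case/andP => sT cT.
  have xT : x \notin T by apply/negP => xT; move: (subsetP sT x xT); rewrite setD11.
  rewrite setU11 andbT setU1K // eqxx andbT cardsU1 xT (eqP cT) eqxx andbT.
  apply/subsetP => y; rewrite in_setU1 => /orP [/eqP -> //|yT].
  by move: (subsetP sT y yT); rewrite in_setD1 => /andP [].
case/andP => /andP [_ _] /eqP eT.
have xT : x \notin T by rewrite -eT setD11.
by rewrite big_setU1.
Qed.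

Lemma esym_T2 r (S : {set 'I_n}) :
  (r.+1)%:R * Defs.esym k n r.+1 S = \sum_(x in S) 'X_x * Defs.esym k n r (S :\ x).
Proof.
rewrite (eq_bigr _ (fun x xS => esym_aux r xS)).
rewrite (exchange_big_dep (fun T : {set 'I_n} => (T \subset S) && (#|T| == r.+1))) /=; last first.
  by move=> x T _ /andP [].
rewrite /Defs.esym mulr_sumr; apply: eq_bigr => T /andP [sT cT].
transitivity (\sum_(x in T) \prod_(i in T) ('X_i : {mpoly k[n]})); last first.
  apply: eq_bigl => x /=; rewrite sT cT /=; apply/idP/andP => [xT|[]//]; split => //.
  exact: (subsetP sT).
by rewrite sumr_const (eqP cT) mulr_natl.
Qed.


Lemma esym_big r (S : {set 'I_n}) : (#|S| < r)%N -> Defs.esym k n r S = 0.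
Proof.
move=> lt; rewrite /Defs.esym big_pred0 // => T; apply/negbTE/negP => /andP [sT /eqP cT].
by move: (subset_leq_card sT); rewrite cT leqNgt lt.
Qed.

Lemma esym_full (S : {set 'I_n}) : Defs.esym k n #|S| S = mono S.
Proof.
rewrite /Defs.esym (big_pred1 S) // => T /=.
rewrite eqEcard; apply/andP/andP => [[-> /eqP ->]|[sT le]]; split => //.
by rewrite eqn_leq le subset_leq_card.
Qed.

Lemma esym_T3 r (S : {set 'I_n}) : (r <= #|S|)%N ->
  (#|S| - r)%:R * Defs.esym k n r S = \sum_(x in S) Defs.esym k n r (S :\ x).
Proof.
case: r => [|r] le.
  rewrite subn0 /Defs.esym.
  have e0 : forall A : {set 'I_n}, \sum_(T : {set 'I_n} | (T \subset A) && (#|T| == 0%N)) \prod_(i in T) ('X_i : {mpoly k[n]}) = 1.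
    move=> A; rewrite (big_pred1 set0) ?big_set0 // => T /=.
    by rewrite cards_eq0 andb_idl // => /eqP ->; rewrite sub0set.
  by rewrite e0 mulr1; under eq_bigr do rewrite e0; rewrite sumr_const.
have H : forall x, x \in S -> Defs.esym k n r.+1 S =
    Defs.esym k n r.+1 (S :\ x) + 'X_x * Defs.esym k n r (S :\ x).
  by move=> x xS; rewrite -esym_T1 ?setD11 // setD1K.
have : (#|S|%:R : {mpoly k[n]}) * Defs.esym k n r.+1 S =
    \sum_(x in S) Defs.esym k n r.+1 (S :\ x) + (r.+1)%:R * Defs.esym k n r.+1 S.
  rewrite esym_T2 -big_split /= mulr_natl -sumr_const.
  by apply: eq_bigr => x xS; rewrite -H.
by rewrite natrB // mulrBl => ->; rewrite addrK.
Qed.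

Definition mm (T : {set 'I_n}) : 'X_{1..n} := (\sum_(i in T) U_(i))%MM.

Lemma mono_mm T : mono T = 'X_[mm T].
Proof.
by rewrite /mono /mm (big_morph _ (@mpolyXD n k) (@mpolyX0 n k)).
Qed.

Lemma mmE T i : mm T i = (i \in T).
Proof.
rewrite /mm mnm_sumE; under eq_bigr do rewrite mnm1E.
case: (boolP (i \in T)) => iT.
  rewrite (bigD1 i) //= eqxx big1 // => j /andP [_ /negbTE ->] //.
rewrite big1 // => j jT; apply/eqP; rewrite eqb0; apply/eqP => ji.
by move: iT; rewrite -ji jT.
Qed.

Lemma mm_inj A B : mm A = mm B -> A = B.
Proof.
move=> e; apply/setP => i; have := congr1 (fun m : 'X_{1..n} => m i) e.
by rewrite /= !mmE; case: (i \in A); case: (i \in B).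
Qed.

Lemma esym_coef r S A :
  (Defs.esym k n r S)@_(mm A) = ((A \subset S) && (#|A| == r))%:R.
Proof.
rewrite /Defs.esym raddf_sum /=.
under eq_bigr do rewrite -/(mono _) mono_mm mcoeffX.
case: (boolP ((A \subset S) && (#|A| == r))) => PA.
  rewrite (bigD1 A) //= eqxx big1 ?addr0 // => T /andP [_ TA].
  by case: eqP => // /mm_inj eTA; move: TA; rewrite eTA eqxx.
rewrite big1 // => T PT; case: eqP => // /mm_inj eTA.
by move: PA; rewrite -eTA PT.
Qed.


End Esym.

Lemma exists_sub (T : finType) (S : {set T}) r : (r <= #|S|)%N ->
  exists A : {set T}, A \subset S /\ #|A| = r.
Proof.
move=> le; exists [set x in take r (enum S)]; split.
  by apply/subsetP => x; rewrite inE => /mem_take; rewrite mem_enum.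
rewrite cardsE; have /card_uniqP -> := take_uniq r (enum_uniq (mem S)).
by rewrite size_takel // -cardE.
Qed.

Lemma exists_sub_in (T : finType) (S : {set T}) r y : y \in S -> (1 <= r <= #|S|)%N ->
  exists A : {set T}, [/\ A \subset S, y \in A & #|A| = r].
Proof.
case: r => // r yS /= le.
have : (r <= #|S :\ y|)%N by rewrite (cardsD1 y S) yS in le.
case/exists_sub => A0 [sA cA]; exists (y |: A0); split.
- apply/subsetP => x; rewrite in_setU1 => /orP [/eqP -> //|xA].
  by move: (subsetP sA x xA); rewrite in_setD1 => /andP [].
- exact: setU11.
- have yA : y \notin A0 by apply/negP => yA; move: (subsetP sA y yA); rewrite setD11.
  by rewrite cardsU1 yA cA.
Qed.


Section Esym2.
Variables (k : fieldType) (n : nat).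
Lemma esym_eq r r' (S S' : {set 'I_n}) : (1 <= r <= #|S|)%N ->
  Defs.esym k n r S = Defs.esym k n r' S' -> S = S' /\ r = r'.
Proof.
move=> /andP [r1 rS] e.
have key : forall A : {set 'I_n}, A \subset S -> #|A| = r -> (A \subset S') && (#|A| == r').
  move=> A sA cA; have := congr1 (mcoeff (mm A)) e; rewrite !esym_coef sA cA eqxx /=.
  by case: ((A \subset S') && (r == r')) => //; rewrite mulr0n => /eqP; rewrite oner_eq0.
have [A [sA cA]] := exists_sub rS.
have rr : r = r' by have /andP [_ /eqP] := key A sA cA; rewrite cA.
subst r'; split => //.
have sub1 : S \subset S'.
  apply/subsetP => y yS; have [B [sB yB cB]] := exists_sub_in yS (introT andP (conj r1 rS)).
  by have /andP [sB' _] := key B sB cB; apply: (subsetP sB').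
have key' : forall A : {set 'I_n}, A \subset S' -> #|A| = r -> (A \subset S).
  move=> B sB cB; have := congr1 (mcoeff (mm B)) e; rewrite !esym_coef sB cB eqxx /=.
  by case: (B \subset S) => //= /eqP; rewrite eq_sym oner_eq0.
have rS' : (r <= #|S'|)%N by apply: leq_trans rS (subset_leq_card sub1).
apply/eqP; rewrite eqEsubset sub1 /=; apply/subsetP => y yS.
have [B [sB yB cB]] := exists_sub_in yS (introT andP (conj r1 rS')).
exact: (subsetP (key' B sB cB)).
Qed.

End Esym2.

Lemma card_ltset n m : (m <= n)%N -> #|[set i : 'I_n | (i < m)%N]| = m.
Proof.
move=> mn.
have -> : [set i : 'I_n | (i < m)%N] = [set widen_ord mn i | i : 'I_m].
  apply/setP => i; rewrite inE; apply/idP/imsetP => [im|[j _ ->] /=]; last exact: ltn_ord.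
  by exists (Ordinal im) => //; apply/val_inj.
by rewrite card_imset ?card_ord // => x y /(congr1 val) /= /val_inj.
Qed.

Lemma exists_notin n (S : {set 'I_n}) : (#|S| < n)%N -> exists z, z \notin S.
Proof.
move=> lt; have : (0 < #|~: S|)%N by have := cardsC S; rewrite card_ord; lia.
by case/card_gt0P => z; rewrite inE => zS; exists z.
Qed.

Lemma levelL (k : fieldType) n (G : {mpoly k[n]} -> Prop) m r :
  [pchar k] =i pred0 -> (m < n)%N ->
  (forall S : {set 'I_n}, #|S| = m -> ideal_gen k n G (Defs.esym k n r.+1 S)) ->
  forall S : {set 'I_n}, #|S| = m -> ideal_gen k n G (Defs.esym k n r.+2 S).
Proof.
move=> ch mn H S cS.
have [z zS] : exists z, z \notin S by apply: exists_notin; rewrite cS.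
have zSx : forall x, z \notin S :\ x by move=> x; rewrite in_setD1 negb_and zS orbT.
have HS : ideal_gen k n G (\sum_(x in S) 'X_x * Defs.esym k n r.+1 (z |: (S :\ x))).
  apply: Jsum => x xS; apply: JM; apply: H.
  by rewrite cardsU1 zSx (cardsD1 x S) xS in cS *; rewrite -cS.
have E : \sum_(x in S) 'X_x * Defs.esym k n r.+1 (z |: (S :\ x)) =
   (r.+2)%:R * Defs.esym k n r.+2 S + 'X_z * ((r.+1)%:R * Defs.esym k n r.+1 S).
  rewrite !esym_T2 mulr_sumr -big_split /=; apply: eq_bigr => x xS.
  by rewrite esym_T1 // mulrDr mulrCA.
apply: (Jdiv ch (c := r.+2)) => //.
move: HS; rewrite E => HS.
have -> : (r.+2)%:R * Defs.esym k n r.+2 S =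
   ((r.+2)%:R * Defs.esym k n r.+2 S + 'X_z * ((r.+1)%:R * Defs.esym k n r.+1 S))
   - 'X_z * ((r.+1)%:R * Defs.esym k n r.+1 S) by rewrite addrK.
apply: JB => //; apply: JM; apply: JM; exact: H.
Qed.

Lemma bk_LL lam j : bk lam j = (LL lam j + 1 - j)%N.
Proof. by []. Qed.

Section Main.
Variables (k : fieldType) (n : nat) (lam : seq nat).
Hypothesis ch : [pchar k] =i pred0.
Hypothesis hp : is_partition lam n.
Hypothesis h1 : (1 <= (part lam 2).-1)%N.
Hypothesis h2 : ((part lam 2).-1 < (part lam 1).-1)%N.

Local Notation a := (part lam 1).
Local Notation b := (part lam 2).
Local Notation G' := (fun q => Gset k n lam q /\ ~ removed k n lam q).
Local Notation J := (ideal_gen k n G').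
Local Notation V0 := [set i : 'I_n | (i < (part lam 1).-1 - (part lam 2).-1)%N].

Lemma an : (a <= n)%N. Proof. exact: a_le_n. Qed.

Lemma card_V0 : #|V0| = (a.-1 - b.-1)%N.
Proof. apply: card_ltset; have := an; lia. Qed.

Lemma removed_shape q : removed k n lam q ->
  exists C : {set 'I_n}, [/\ q = Defs.esym k n (n - a.-1) C,
     (forall i, i \in C -> i \notin V0) & #|C| = (n - a.-1)%N].
Proof.
case=> U [cU UV ->]; exists (~: (V0 :|: U)); split => //.
  by move=> i; rewrite !inE negb_or => /andP [].
have dis : V0 :&: U = set0.
  apply/setP => i; rewrite !inE; apply/negP => /andP [iV /UV]; lia.
rewrite (cardsCs (~: _)) setCK card_ord cardsU dis cards0 card_V0 cU.
have := an; lia.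
Qed.

Lemma LL1n : (LL lam 1 <= n)%N.
Proof. have := LL_delta hp (j := 1); have := an; lia. Qed.

Lemma GE1 j : (1 <= j <= (size lam).-1)%N -> J (Defs.esym k n j [set: 'I_n]).
Proof.
move=> hj; apply: Jg; split; first by left; exists j.
move/removed_shape => [C [e _ cC]].
have hj' : (1 <= j <= #|[set: 'I_n]|)%N.
  rewrite cardsT card_ord; have := LL1n; rewrite (LL_size hp); lia.
have [eS _] := esym_eq hj' e.
by move: cC; rewrite -eS cardsT card_ord; have := an; lia.
Qed.

Lemma GE2 j (S : {set 'I_n}) : (1 <= j <= b.-1)%N -> #|S| = (n - j)%N ->
  J (Defs.esym k n (bk lam j) S).
Proof.
move=> hj cS; case: (ltnP #|S| (bk lam j)) => hb.
  by rewrite esym_big //; apply: J0.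
apply: Jg; split; first by right; left; exists j, S.
move/removed_shape => [C [e _ cC]].
have hj' : (1 <= bk lam j <= #|S|)%N.
  rewrite hb andbT bk_LL; have := LL_ge hp h1 (j := j); have := an; lia.
have [eS _] := esym_eq hj' e.
by move: cC; rewrite -eS cS; have := an; lia.
Qed.

Lemma GE3 (T : {set 'I_n}) : #|T| = (n - a.-1)%N -> (exists2 i, i \in T & i \in V0) ->
  J (mono k T).
Proof.
move=> cT [i iT iV]; rewrite -esym_full cT; apply: Jg; split.
  by right; right; exists T.
move/removed_shape => [C [e CV cC]].
have hj' : (1 <= n - a.-1 <= #|T|)%N by rewrite cT leqnn andbT; have := an; lia.
have [eS _] := esym_eq hj' e.
by move: (CV i); rewrite -eS iT iV => /(_ isT).
Qed.


Lemma LV j : (1 <= j <= b.-1)%N -> forall d (S : {set 'I_n}), #|S| = (n - j)%N ->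
  J (Defs.esym k n (bk lam j + d) S).
Proof.
move=> hj d; have b1 : (1 <= bk lam j)%N.
  rewrite bk_LL; have := LL_ge hp h1 (j := j); have := an; lia.
elim: d => [|d IH] S cS; first by rewrite addn0; apply: GE2.
have -> : (bk lam j + d.+1 = (bk lam j + d).-1.+2)%N by lia.
apply: (levelL ch (m := (n - j)%N)) => //; first by have := an; lia.
move=> S' cS'; rewrite prednK; [exact: IH | lia].
Qed.

Lemma MA (T : {set 'I_n}) : #|T| = (n - a.-1)%N -> J (mono k T).
Proof.
move=> cT; case: (boolP [exists i, (i \in T) && (i \in V0)]).
  by case/existsP => i /andP [iT iV]; apply: GE3 => //; exists i.
rewrite negb_exists => /forallP nTV.
have dis : T :&: V0 = set0.
  by apply/setP => i; rewrite inE in_set0; apply: negbTE (nTV i).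
have cTV : #|T :|: V0| = (n - b.-1)%N.
  rewrite cardsU dis cards0 cT card_V0; have := an; lia.
have hb1 : (1 <= b.-1 <= b.-1)%N by rewrite leqnn andbT.
have bkle : (bk lam b.-1 <= n - a.-1)%N.
  rewrite bk_LL; have := LL_le hp h1 b.-1; have := an; lia.
have := LV hb1 (n - a.-1 - bk lam b.-1) cTV.
rewrite subnKC // /Defs.esym (bigD1 T) /=; last first.
  by rewrite subsetUl cT eqxx.
move=> H; have -> : mono k T = (mono k T + \sum_(T' : {set 'I_n} | ((T' \subset T :|: V0) &&
   (#|T'| == n - a.-1)%N) && (T' != T)) \prod_(i in T') 'X_i) -
   \sum_(T' : {set 'I_n} | ((T' \subset T :|: V0) && (#|T'| == n - a.-1)%N) && (T' != T))
   \prod_(i in T') 'X_i by rewrite addrK.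
apply: JB => //; apply: Jsum => T' /andP [/andP [sT' /eqP cT'] nT'].
apply: GE3 => //.
case: (boolP [exists i, (i \in T') && (i \in V0)]).
  by case/existsP => i /andP [iT iV]; exists i.
rewrite negb_exists => /forallP nT'V.
have sub : T' \subset T.
  apply/subsetP => i iT'; have := subsetP sT' i iT'; rewrite in_setU => /orP [//|iV].
  by have := nT'V i; rewrite iT' iV.
have : T' == T by rewrite eqEcard sub cT cT' leqnn.
by rewrite (negbTE nT').
Qed.

Lemma MG d (S : {set 'I_n}) : J (Defs.esym k n (n - a.-1 + d) S).
Proof.
elim: d S => [|d IH] S.
  rewrite addn0 /Defs.esym; apply: Jsum => T /andP [_ /eqP cT]; exact: MA.
apply: (Jdiv ch (c := (n - a.-1 + d).+1)) => //.
rewrite addnS esym_T2; apply: Jsum => x _; apply: JM; exact: IH.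
Qed.


Lemma LL0 : LL lam 0 = 0%N.
Proof. by rewrite /LL big_geq. Qed.

Lemma DPsub q : DP_gen k n lam q -> J q.
Proof.
case=> m [r [S [/andP [m1 mn] rm cond cS ->]]].
have an' := an.
have jn : (n - m <= n)%N by lia.
have mj : m = (n - (n - m))%N by lia.
rewrite mj (DP_cond hp r jn) in cond.
case: (leqP (n - a.-1) r) => hr.
  have -> : r = (n - a.-1 + (r - (n - a.-1)))%N by lia.
  exact: MG.
case: (posnP (n - m)) => j0.
  rewrite j0 LL0 in cond.
  have eS : S = [set: 'I_n].
    by apply/eqP; rewrite eqEcard subsetT cardsT card_ord cS; lia.
  case: (leqP r (size lam).-1) => hr2.
    by rewrite eS; apply: GE1; rewrite hr2 andbT; lia.
  have hb1 : (1 <= 1 <= b.-1)%N by rewrite leqnn /=; exact: h1.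
  have bk1 : bk lam 1 = size lam by rewrite bk_LL (LL_size hp); lia.
  apply: (Jdiv ch (c := (#|S| - r)%N)); first by lia.
  rewrite esym_T3; last by lia.
  apply: Jsum => x xS.
  have -> : r = (bk lam 1 + (r - bk lam 1))%N by lia.
  by apply: LV => //; rewrite (cardsD1 x S) xS in cS; lia.
case: (leqP (n - m) b.-1) => hj.
  have hj' : (1 <= n - m <= b.-1)%N by rewrite hj andbT.
  have -> : r = (bk lam (n - m) + (r - bk lam (n - m)))%N by rewrite bk_LL; lia.
  by apply: LV => //; lia.
have bj : (b <= n - m)%N by lia.
move: cond; rewrite (LL_eq hp h1 bj); lia.
Qed.

Lemma GtoDP q : Gset k n lam q -> DP_ideal k n lam q.
Proof.
have an' := an.
have dn : delta lam n n = n by have := LL_delta hp (j := 0); rewrite LL0 subn0; lia.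
case=> [[j [/andP [j1 jl] ->]]|[[j [S [/andP [j1 jb] cS ->]]]|[S [cS ->]]]].
- apply: Jg; exists n, j, [set: 'I_n]; split => //.
  + by apply/andP; split => //; lia.
  + have := LL1n; rewrite (LL_size hp); lia.
  + by rewrite dn; lia.
  + by rewrite cardsT card_ord.
- case: (ltnP #|S| (bk lam j)) => hb.
    by rewrite esym_big //; apply: J0.
  apply: Jg; exists (n - j)%N, (bk lam j), S; split => //.
  + by apply/andP; split; lia.
  + by rewrite -cS.
  + by rewrite (DP_cond hp); [rewrite bk_LL; lia | lia].
- apply: Jg; exists (n - a.-1)%N, (n - a.-1)%N, S; split => //.
  + by apply/andP; split; lia.
  + rewrite (DP_cond hp); last by lia.
    rewrite (LL_eq hp h1); lia.
Qed.

End Main.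

Theorem mainTheorem7 (k : fieldType) (n : nat) (lam : seq nat) :
  [pchar k] =i pred0 ->
  is_partition lam n ->
  (1 <= (part lam 2).-1)%N ->
  ((part lam 2).-1 < (part lam 1).-1)%N ->
  forall p : {mpoly k[n]},
    ideal_gen k n (fun q => Gset k n lam q /\ ~ removed k n lam q) p <-> DP_ideal k n lam p.
Proof.
move=> ch hp h1 h2 p; split.
  case=> s [H ->]; rewrite big_seq; apply: Jsum => q qs; apply: JM.
  by case: (H q qs) => G _; apply: GtoDP.
case=> s [H ->]; rewrite big_seq; apply: Jsum => q qs; apply: JM.
by apply: DPsub => //; apply: H.
Qed.
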